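(* Let $\Sigma$ be an $n\times n$ Hermitian positive semidefinite matrix which is irreducible. If the argument of each non-zero off-diagonal entry of $-\Sigma$ lies in $\left(-\frac{\pi}{2^n},\frac{\pi}{2^n}\right)$, then ${\operatorname{mr}}(\Sigma)=n-1$, where \[{\operatorname{mr}}(\Sigma)=\min\{\operatorname{rank}(\hat\Sigma)\mid \Sigma=\tilde\Sigma+\hat\Sigma,\ \hat\Sigma\text{ Hermitian positive semidefinite},\ \tilde\Sigma\text{ diagonal}\}.\]
   Context: A square matrix is irreducible if it cannot be brought into block-diagonal form (with at least two diagonal blocks) by a simultaneous permutation of its rows and columns. In the definition of ${\operatorname{mr}}$ the diagonal matrix $\tilde\Sigma$ (necessarily real, since $\Sigma-\hat\Sigma$ is Hermitian) is not required to be positive semidefinite. *)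

(* Defs.v *)
From HB Require Import structures.
From mathcomp Require Import all_boot all_order all_algebra all_fingroup.
From mathcomp Require Import complex.
From mathcomp Require Import reals trigo.
Set Implicit Arguments. Unset Strict Implicit. Unset Printing Implicit Defensive.
Import Order.TTheory GRing.Theory Num.Theory.
Local Open Scope ring_scope.
Local Open Scope complex_scope.

Section Defs.
Variable R : realType.
Notation C := (R[i]).

Definition ctrmx (m n : nat) (A : 'M[C]_(m, n)) : 'M[C]_(n, m) :=
  (map_mx (fun z : C => z^*) A)^T.

Definition hermitian (n : nat) (A : 'M[C]_n) : Prop := ctrmx A = A.

Definition psd (n : nat) (A : 'M[C]_n) : Prop :=
  hermitian A /\ forall x : 'cV[C]_n, 0 <= (ctrmx x *m A *m x) 0 0.

Definition is_diag (n : nat) (A : 'M[C]_n) : Prop :=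
  forall i j : 'I_n, i != j -> A i j = 0.

Definition reducible (n : nat) (A : 'M[C]_n) : Prop :=
  exists (s : 'S_n) (k : nat), (0 < k < n)%N /\
    forall i j : 'I_n, (i < k)%N != (j < k)%N -> A (s i) (s j) = 0.

Definition irreducible (n : nat) (A : 'M[C]_n) : Prop := ~ reducible A.

Definition arg_in (z : C) (a b : R) : Prop :=
  exists t : R, a < t < b /\ z = `|z| * (cos t +i* sin t).

Definition decomp (n : nat) (S Sh St : 'M[C]_n) : Prop :=
  S = St + Sh /\ psd Sh /\ is_diag St.

Definition is_mr (n : nat) (S : 'M[C]_n) (r : nat) : Prop :=
  (exists Sh St : 'M[C]_n, decomp S Sh St /\ \rank Sh = r) /\
  (forall Sh St : 'M[C]_n, decomp S Sh St -> (r <= \rank Sh)%N).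
End Defs.

(* Main.v *)
Require Import Defs.
From HB Require Import structures.
From mathcomp Require Import all_boot all_order all_algebra all_fingroup.
From mathcomp Require Import complex.
From mathcomp Require Import reals trigo.
From mathcomp Require Import ring lra.
Import Order.TTheory GRing.Theory Num.Theory.
Local Open Scope ring_scope.
Local Open Scope complex_scope.
Set Implicit Arguments. Unset Strict Implicit. Unset Printing Implicit Defensive.

Section Cone.
Variable R : realType.
Notation C := (R[i]).
Local Notation Re := (@complex.Re R).
Local Notation Im := (@complex.Im R).
Local Notation cj := (@conjc R).

Definition incone (a : R) (z : C) : Prop := `|Im z| * cos a < Re z * sin a.

Lemma incone_neq0 a z : incone a z -> z != 0.
Proof. by rewrite /incone; apply: contraTneq => ->; rewrite /= normr0 mul0r mul0r ltxx. Qed.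

Lemma incone_add a z w : 0 <= cos a -> incone a z -> incone a w -> incone a (z + w).
Proof.
rewrite /incone => c0 hz hw.
case: z w hz hw => x y [u v] /= hz hw.
apply: (le_lt_trans (y := (`|y| + `|v|) * cos a)).
  by apply: ler_wpM2r => //; apply: ler_normD.
by rewrite mulrDl mulrDl; apply: ltrD.
Qed.

Lemma incone_scale a z (k : R) : 0 < k -> incone a z -> incone a (z * k%:C).
Proof.
rewrite /incone => k0; case: z => x y /=.
move=> h; simpc; move: h =>/= h; rewrite normrM (gtr0_norm k0).
by rewrite ![_ * k * _]mulrAC ltr_pM2r.
Qed.

Lemma incone_pos a z : 0 < sin a -> 0 <= cos a -> incone a z -> 0 < Re z.
Proof.
rewrite /incone => s0 c0 h.
have : 0 < Re z * sin a by apply: le_lt_trans h; apply: mulr_ge0.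
by rewrite pmulr_lgt0.
Qed.

Lemma trig2 (a : R) : cos a ^+ 2 + sin a ^+ 2 = 1.
Proof. exact: cos2Dsin2. Qed.

Lemma incone_mul a z w : 0 < sin a -> 0 < cos a -> 0 <= cos a ^+ 2 - sin a ^+ 2 ->
  incone a z -> incone a w -> incone (a *+ 2) (z * w).
Proof.
move=> s0 c0 cs hz hw.
have x0 := incone_pos s0 (ltW c0) hz.
have u0 := incone_pos s0 (ltW c0) hw.
move: hz hw x0 u0; rewrite /incone sin_mulr2n cos_mulr2n.
have e := trig2 a.
case: z w => x y [u v] /= hz hw x0 u0.
set s := sin a in s0 cs e hz hw *; set c := cos a in c0 cs e hz hw *.
have -> : c ^+ 2 *+ 2 - 1 = c ^+ 2 - s ^+ 2 by rewrite -e; ring.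
set Y := `|y| in hz *; set V := `|v| in hw *.
have Y0 : 0 <= Y by apply: normr_ge0.
have V0 : 0 <= V by apply: normr_ge0.
have h1 : `|x * v + y * u| <= x * V + Y * u.
  apply: le_trans (ler_normD _ _) _.
  by rewrite !normrM (gtr0_norm x0) (gtr0_norm u0).
have h3 : y * v <= Y * V by rewrite /Y /V -normrM; apply: ler_norm.
apply: (le_lt_trans (y := (x * V + Y * u) * (c ^+ 2 - s ^+ 2))).
  by apply: ler_wpM2r.
apply: (lt_le_trans (y := (x * u - Y * V) * ((c * s) *+ 2))); last first.
  apply: ler_wpM2r; first by rewrite mulrn_wge0 // mulr_ge0 // ltW.
  by rewrite lerD2l lerN2.
have p0 : 0 < x * s - Y * c by rewrite subr_gt0.
have q0 : 0 < u * s - V * c by rewrite subr_gt0.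
rewrite -(ltr_pM2r (mulr_gt0 s0 s0)) -subr_gt0.
have -> : (x * u - Y * V) * ((c * s) *+ 2) * (s * s) - (x * V + Y * u) * (c ^+ 2 - s ^+ 2) * (s * s)
  = 2 * c * s * (x * s - Y * c) * (u * s - V * c) + s * ((x * s - Y * c) * V + (u * s - V * c) * Y) * (c ^+ 2 + s ^+ 2) by ring.
apply: ltr_pwDl; first by rewrite !mulr_gt0.
apply: mulr_ge0; last by rewrite addr_ge0 ?sqr_ge0.
by apply: mulr_ge0; [exact: ltW | rewrite addr_ge0 // mulr_ge0 // ltW].
Qed.

Lemma incone_le2 a z : 0 < sin a -> 0 < cos a -> 0 <= cos a ^+ 2 - sin a ^+ 2 ->
  incone a z -> incone (a *+ 2) z.
Proof.
move=> s0 c0 cs hz.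
have x0 := incone_pos s0 (ltW c0) hz.
move: hz x0; rewrite /incone sin_mulr2n cos_mulr2n.
have e := trig2 a.
case: z => x y /= hz x0.
set s := sin a in s0 cs e hz *; set c := cos a in c0 cs e hz *.
have -> : c ^+ 2 *+ 2 - 1 = c ^+ 2 - s ^+ 2 by rewrite -e; ring.
set Y := `|y| in hz *.
have Y0 : 0 <= Y by apply: normr_ge0.
have p0 : 0 < x * s - Y * c by rewrite subr_gt0.
rewrite -(ltr_pM2r s0) -subr_gt0.
have -> : x * (c * s *+ 2) * s - Y * (c ^+ 2 - s ^+ 2) * s =
   2 * c * s * (x * s - Y * c) + s * Y * (c ^+ 2 + s ^+ 2) by ring.
apply: ltr_pwDl; first by rewrite !mulr_gt0.
by rewrite !mulr_ge0 ?addr_ge0 ?sqr_ge0 // ltW.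
Qed.

Definition form n (A : 'M[C]_n) (x : 'cV[C]_n) : C := (ctrmx x *m A *m x) 0 0.

Lemma formE n (A : 'M[C]_n) x : form A x = \sum_k (cj (x k 0)) * (A *m x) k 0.
Proof. by rewrite /form -mulmxA mxE; apply: eq_bigr => k _; rewrite !mxE. Qed.

Lemma herm_entry n (A : 'M[C]_n) i j : Defs.hermitian A -> (cj (A j i)) = A i j.
Proof. by rewrite /Defs.hermitian => hA; have := congr1 (fun M : 'M[C]_n => M i j) hA; rewrite !mxE. Qed.

Lemma ctrmxD n (u v : 'cV[C]_n) : ctrmx (u + v) = ctrmx u + ctrmx v.
Proof. by apply/matrixP => i j; rewrite !mxE rmorphD. Qed.

Lemma ctrmxZ n a (u : 'cV[C]_n) : ctrmx (a *: u) = (cj a) *: ctrmx u.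
Proof. by apply/matrixP => i j; rewrite !mxE rmorphM. Qed.

Lemma form_dd n (A : 'M[C]_n) (i j : 'I_n) :
  (ctrmx (delta_mx i 0 : 'cV[C]_n) *m A *m (delta_mx j 0 : 'cV[C]_n)) 0 0 = A i j.
Proof.
have -> : ctrmx (delta_mx i 0 : 'cV[C]_n) = delta_mx ord0 i.
  apply/matrixP => k l; rewrite !mxE andbC.
  by case: (_ && _); rewrite ?conjc1 ?conjc0.
by rewrite -rowE -colE !mxE.
Qed.

Lemma entD m n (u v : 'M[C]_(m, n)) i j : (u + v) i j = u i j + v i j.
Proof. by rewrite mxE. Qed.
Lemma entZ m n a (u : 'M[C]_(m, n)) i j : (a *: u) i j = a * u i j.
Proof. by rewrite mxE. Qed.

Lemma form_delta2 n (A : 'M[C]_n) (i j : 'I_n) a :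
  form A (a *: delta_mx i 0 + delta_mx j 0) =
  (cj a) * a * A i i + (cj a) * A i j + A j i * a + A j j.
Proof.
rewrite /form ctrmxD ctrmxZ !mulmxDl !mulmxDr -!scalemxAl -!scalemxAr.
by rewrite !entD !entZ !form_dd; ring.
Qed.

Lemma form_delta n (A : 'M[C]_n) (i : 'I_n) : form A (delta_mx i 0) = A i i.
Proof. exact: form_dd. Qed.

Lemma psd_diag_ge0 n (A : 'M[C]_n) (i : 'I_n) : psd A -> 0 <= A i i.
Proof. by case=> _ h; rewrite -form_delta; apply: h. Qed.

Lemma psd_row0 n (A : 'M[C]_n) (i j : 'I_n) : psd A -> A i i = 0 -> A i j = 0.
Proof.
move=> hA hii; apply/eqP; apply/negPn/negP => hij.
have hjj := psd_diag_ge0 j hA.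
have hr : (cj (A j j)) = A j j by apply: herm_entry; case: hA.
set a := - (A j j + 1) / (cj (A i j)).
have := hA.2 (a *: delta_mx i 0 + delta_mx j 0).
rewrite -/(form _ _) form_delta2 hii mulr0 add0r.
have cij : (cj (A i j)) != 0 by rewrite conjc_eq0.
have hji : A j i = (cj (A i j)) by rewrite herm_entry //; case: hA.
have -> : (cj a) = - (A j j + 1) / A i j.
  by rewrite /a fmorph_div rmorphN rmorphD rmorph1 /= hr conjcK.
rewrite {}hji /a.
have -> : - (A j j + 1) / A i j * A i j + (cj (A i j)) * (- (A j j + 1) / (cj (A i j))) + A j j
   = - A j j - 2%:R by field; rewrite hij cij.
move=> h; have := addr_ge0 h hjj; rewrite addrAC addNr add0r oppr_ge0.
by move=> h2; have := lt_le_trans (ltr0Sn C 1) h2; rewrite ltxx.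
Qed.

Section Schur.
Variable m : nat.
Implicit Types (K : 'M[C]_(m.+1)) (x : 'cV[C]_(m.+1)) (y : 'cV[C]_m).
Local Notation l0 := (lift ord0).

Definition schur K : 'M[C]_m := \matrix_(i < m, j < m)
  (K (l0 i) (l0 j) - K (l0 i) ord0 * K ord0 (l0 j) / K ord0 ord0).
Definition rest x : 'cV[C]_m := \col_(i < m) x (l0 i) 0.
Definition ext K y : 'cV[C]_(m.+1) := \col_k
  (if unlift ord0 k is Some j then y (j : 'I_m) 0
   else - (\sum_(j < m) K ord0 (l0 j) * y j 0) / K ord0 ord0).

Lemma mul_row0 K x : (K *m x) ord0 0 =
  K ord0 ord0 * x ord0 0 + \sum_(j < m) K ord0 (l0 j) * x (l0 j) 0.
Proof. by rewrite mxE big_ord_recl. Qed.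

Lemma mul_rowl K x (i : 'I_m) : (K *m x) (l0 i) 0 =
  K (l0 i) ord0 * x ord0 0 + \sum_(j < m) K (l0 i) (l0 j) * x (l0 j) 0.
Proof. by rewrite mxE big_ord_recl. Qed.

Lemma schur_mul K x (i : 'I_m) : K ord0 ord0 != 0 ->
  (schur K *m rest x) i 0 =
  (K *m x) (l0 i) 0 - K (l0 i) ord0 / K ord0 ord0 * (K *m x) ord0 0.
Proof.
move=> k0; rewrite mul_rowl mul_row0 mxE.
under eq_bigr => j _ do rewrite !mxE mulrBl.
rewrite sumrB.
have -> : \sum_(j < m) K (l0 i) ord0 * K ord0 (l0 j) / K ord0 ord0 * x (l0 j) 0 =
   K (l0 i) ord0 / K ord0 ord0 * \sum_(j < m) K ord0 (l0 j) * x (l0 j) 0.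
  by rewrite mulr_sumr; apply: eq_bigr => j _; ring.
set S1 := \sum_(j < m) _; set S2 := \sum_(j < m) _.
by field.
Qed.

Lemma ext_lift K y (j : 'I_m) : ext K y (l0 j) 0 = y j 0.
Proof. by rewrite mxE liftK. Qed.

Lemma ext0 K y : ext K y ord0 0 = - (\sum_(j < m) K ord0 (l0 j) * y j 0) / K ord0 ord0.
Proof. by rewrite mxE unlift_none. Qed.

Lemma rest_ext K y : rest (ext K y) = y.
Proof. by apply/matrixP => i j; rewrite !mxE liftK ord1. Qed.

Lemma ext_row0 K y : K ord0 ord0 != 0 -> (K *m ext K y) ord0 0 = 0.
Proof.
move=> k0; rewrite mul_row0 ext0.
under [X in _ + X]eq_bigr => j _ do rewrite ext_lift.
by set S := \sum_(j < m) _; field.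
Qed.

Lemma form_split K x : form K x =
  cj (x ord0 0) * (K *m x) ord0 0 + \sum_(i < m) cj (x (l0 i) 0) * (K *m x) (l0 i) 0.
Proof. by rewrite formE big_ord_recl. Qed.

Lemma form_schur K x : form (schur K) (rest x) =
  \sum_(i < m) cj (x (l0 i) 0) * (schur K *m rest x) i 0.
Proof. by rewrite formE; apply: eq_bigr => i _; rewrite mxE. Qed.

Lemma herm_schur K : Defs.hermitian K -> Defs.hermitian (schur K).
Proof.
move=> hK; apply/matrixP => i j; rewrite !mxE.
rewrite !(rmorphB, rmorphM, fmorph_div) /=.
rewrite conjc_inv.
rewrite !herm_entry //; ring.
Qed.

Lemma psd_schur K : psd K -> K ord0 ord0 != 0 -> psd (schur K).
Proof.
move=> [hK hf] k0; split; first exact: herm_schur.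
move=> y; have := hf (ext K y); rewrite -/(form _ _) => h.
rewrite -/(form _ _) -{1}(rest_ext K y) form_schur.
rewrite form_split ext_row0 // mulr0 add0r in h.
under eq_bigr => i _ do rewrite schur_mul // ext_row0 // mulr0 subr0.
exact: h.
Qed.

Lemma psd_of_schur K : Defs.hermitian K -> 0 < K ord0 ord0 -> psd (schur K) -> psd K.
Proof.
move=> hK k0 [hS hf]; split => // x.
rewrite -/(form _ _).
have kn0 : K ord0 ord0 != 0 by rewrite gt_eqF.
have kr : cj (K ord0 ord0) = K ord0 ord0 by apply: herm_entry.
set c := (K *m x) ord0 0.
have e : form K x = form (schur K) (rest x) + cj c * c / K ord0 ord0.
  rewrite form_split form_schur.
  under [X in _ = X + _]eq_bigr => i _ do rewrite schur_mul // mulrBr.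
  rewrite sumrB -/c.
  have -> : \sum_(i < m) cj (x (l0 i) 0) * (K (l0 i) ord0 / K ord0 ord0 * c) =
     cj (\sum_(i < m) K ord0 (l0 i) * x (l0 i) 0) * c / K ord0 ord0.
    rewrite rmorph_sum mulr_suml mulr_suml; apply: eq_bigr => i _.
    rewrite rmorphM /= herm_entry //; ring.
  have hc : \sum_(i < m) K ord0 (l0 i) * x (l0 i) 0 = c - K ord0 ord0 * x ord0 0.
    by rewrite /c mul_row0; ring.
  rewrite hc rmorphB rmorphM /= kr.
  set S := \sum_(i < m) _.
  by field.
rewrite e; apply: addr_ge0; first exact: hf.
apply: divr_ge0; last exact: ltW.
by rewrite mulrC; apply: mulcJ_ge0.
Qed.
End Schur.

Definition conn n (H : 'M[C]_n) : Prop := forall A : {set 'I_n}, A != set0 -> A != setT ->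
  exists i j, [/\ i \in A, j \notin A & H i j != 0].
Definition cone n (a : R) (H : 'M[C]_n) : Prop := forall i j : 'I_n, i != j ->
  H i j = 0 \/ incone a (- H i j).
Definition co (b : R) (z : C) := z = 0 \/ incone b z.

Section Trig.
Variable a : R.
Hypotheses (s0 : 0 < sin a) (c0 : 0 < cos a) (cs : 0 <= cos a ^+ 2 - sin a ^+ 2).

Lemma cos2_ge0 : 0 <= cos (a *+ 2).
Proof.
rewrite cos_mulr2n; have e := trig2 a.
have -> : cos a ^+ 2 *+ 2 - 1 = cos a ^+ 2 - sin a ^+ 2 by rewrite -e; ring.
exact: cs.
Qed.

Lemma co_le2 z : co a z -> co (a *+ 2) z.
Proof. by case=> [->|h]; [left|right; apply: incone_le2]. Qed.

Lemma co_mul z w : co a z -> co a w -> co (a *+ 2) (z * w).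
Proof.
case=> [->|hz]; first by left; rewrite mul0r.
case=> [->|hw]; first by left; rewrite mulr0.
by right; apply: incone_mul.
Qed.

Lemma co_scale b z k : 0 < k -> co b z -> co b (z * k%:C).
Proof. by move=> k0 [->|h]; [left; rewrite mul0r | right; apply: incone_scale]. Qed.

Lemma co_add_in z w : incone (a *+ 2) z -> co (a *+ 2) w -> incone (a *+ 2) (z + w).
Proof. by move=> hz [->|hw]; [rewrite addr0 | apply: incone_add => //; apply: cos2_ge0]. Qed.

Lemma co_add z w : co (a *+ 2) z -> co (a *+ 2) w -> co (a *+ 2) (z + w).
Proof.
case=> [->|hz] hw; first by rewrite add0r.
by right; apply: co_add_in.
Qed.
End Trig.

Lemma pos_real (z : C) : 0 < z -> exists r : R, z = r%:C /\ 0 < r.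
Proof. by case: z => x y; rewrite ltcE /= => /andP[/eqP -> h]; exists x. Qed.

Section SchurCone.
Variable m : nat.
Local Notation l0 := (lift ord0).
Implicit Types (K : 'M[C]_(m.+1)).

Lemma schur_neg K (r : R) (i j : 'I_m) : K ord0 ord0 = r%:C -> r != 0 ->
  - schur K i j = - K (l0 i) (l0 j) + (- K (l0 i) ord0) * (- K ord0 (l0 j)) * (r^-1)%:C.
Proof.
move=> e r0; rewrite mxE e fmorphV /=.
by rewrite mulrNN; ring.
Qed.

Variable a : R.
Hypotheses (s0 : 0 < sin a) (c0 : 0 < cos a) (cs : 0 <= cos a ^+ 2 - sin a ^+ 2).

Lemma cone_co K (i j : 'I_(m.+1)) : cone a K -> i != j -> co a (- K i j).
Proof. by move=> hc ij; case: (hc i j ij) => [->|h]; [left; rewrite oppr0 | right]. Qed.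

Lemma cone_schur K : 0 < K ord0 ord0 -> cone a K -> cone (a *+ 2) (schur K).
Proof.
move=> k0 hc i j ij.
have [r [er r0]] := pos_real k0.
have : co (a *+ 2) (- schur K i j).
  rewrite (schur_neg i j er (lt0r_neq0 r0)).
  apply: co_add => //.
    by apply: co_le2 => //; apply: cone_co => //; rewrite (inj_eq lift_inj).
  apply: co_scale; first by rewrite invr_gt0.
  by apply: co_mul => //; apply: cone_co => //; rewrite ?neq_lift // eq_sym neq_lift.
by case=> [/eqP|h]; [rewrite oppr_eq0 => /eqP; left | right].
Qed.

Lemma schur_nz K (i l : 'I_m) : 0 < K ord0 ord0 -> cone a K -> i != l ->
  (K (l0 i) (l0 l) != 0 \/ (K (l0 i) ord0 != 0 /\ K ord0 (l0 l) != 0)) ->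
  schur K i l != 0.
Proof.
move=> k0 hc il h.
have [r [er r0]] := pos_real k0.
rewrite -oppr_eq0 (schur_neg i l er (lt0r_neq0 r0)).
have hp : co (a *+ 2) ((- K (l0 i) ord0) * (- K ord0 (l0 l)) * (r^-1)%:C).
  apply: co_scale; first by rewrite invr_gt0.
  by apply: co_mul => //; apply: cone_co => //; rewrite ?neq_lift // eq_sym neq_lift.
have hk : co a (- K (l0 i) (l0 l)) by apply: cone_co => //; rewrite (inj_eq lift_inj).
apply: (@incone_neq0 (a *+ 2)); case: h => [nz|[nz1 nz2]].
  apply: co_add_in => //; apply: incone_le2 => //.
  by case: hk => // /eqP; rewrite oppr_eq0 (negbTE nz).
rewrite addrC; apply: co_add_in => //; last by apply: co_le2.
apply: incone_scale; first by rewrite invr_gt0.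
have hi : incone a (- K (l0 i) ord0).
  have ne : l0 i != ord0 by rewrite eq_sym neq_lift.
  by case: (cone_co hc ne) => // /eqP; rewrite oppr_eq0 (negbTE nz1).
have hj : incone a (- K ord0 (l0 l)).
  have ne : ord0 != l0 l by rewrite neq_lift.
  by case: (cone_co hc ne) => // /eqP; rewrite oppr_eq0 (negbTE nz2).
exact: incone_mul.
Qed.

Lemma conn_schur K : 0 < K ord0 ord0 -> cone a K -> conn K -> conn (schur K).
Proof.
move=> k0 hc hK A An0 AnT.
set A' := [set l0 i | i in A].
have memA' i : (l0 i \in A') = (i \in A) by rewrite mem_imset //; apply: lift_inj.
have nA' : ord0 \notin A'.
  by apply/imsetP => -[i _] /eqP; rewrite (negbTE (neq_lift _ _)).
have A'n0 : A' != set0.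
  by case/set0Pn: An0 => i iA; apply/set0Pn; exists (l0 i); rewrite memA'.
have A'nT : A' != setT by apply: contraNneq nA' => ->; rewrite in_setT.
have [l lA] : exists l, l \notin A.
  have : ~~ (setT \subset A) by rewrite subTset.
  by case/subsetPn => l _ lA; exists l.
have diff x y : x \in A -> y \notin A -> x != y.
  by move=> xA yA; apply: contraNneq yA => <-.
have [i [j [iA' jA' hij]]] := hK A' A'n0 A'nT.
case/imsetP: iA' => i' i'A ei; subst i.
case: (unliftP ord0 j) => [j'|] ej; subst j.
  have j'A : j' \notin A by rewrite -memA'.
  by exists i', j'; split => //; apply: schur_nz => //; [exact: diff | left].
set B := ord0 |: A'.
have Bn0 : B != set0 by apply/set0Pn; exists ord0; rewrite setU11.
have lB : l0 l \notin B by rewrite in_setU1 memA' negb_or lA andbT eq_sym neq_lift.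
have BnT : B != setT by apply: contraNneq lB => ->; rewrite in_setT.
have [k [j2 [kB j2B hkj]]] := hK B Bn0 BnT.
case: (unliftP ord0 j2) j2B hkj => [l2|] -> j2B hkj; last by rewrite setU11 in j2B.
have l2A : l2 \notin A by move: j2B; rewrite in_setU1 memA' negb_or => /andP[].
move: kB; rewrite in_setU1 => /orP[/eqP ek|kA'].
  subst k; exists i', l2; split => //; apply: schur_nz => //; [exact: diff | by right].
case/imsetP: kA' => k' k'A ek; subst k.
by exists k', l2; split => //; apply: schur_nz => //; [exact: diff | left].
Qed.
End SchurCone.

Lemma K00_pos m (K : 'M[C]_(m.+2)) : psd K -> conn K -> 0 < K ord0 ord0.
Proof.
move=> hK hc.
have n0 : [set ord0 : 'I_(m.+2)] != set0 by apply/set0Pn; exists ord0; rewrite set11.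
have nT : [set ord0 : 'I_(m.+2)] != setT.
  apply/negP => /eqP e; have : lift ord0 ord0 \in [set ord0 : 'I_(m.+2)] by rewrite e in_setT.
  by rewrite in_set1 eq_sym (negbTE (neq_lift _ _)).
have [i [j [iA jA hij]]] := hc _ n0 nT.
move: iA; rewrite in_set1 => /eqP ei; subst i.
rewrite lt_def psd_diag_ge0 // andbT.
by apply/eqP => h0; move/eqP: hij; apply; apply: psd_row0.
Qed.

Lemma trig_facts m (a : R) : 0 < a -> a * 2 ^+ m.+1 <= pi / 2 ->
  [/\ 0 < sin a, 0 < cos a, 0 <= cos a ^+ 2 - sin a ^+ 2 & (a *+ 2) * 2 ^+ m <= pi / 2].
Proof.
move=> a0 h.
have p0 : 0 < pi :> R by apply: pi_gt0.
have e1 : 1 <= 2 ^+ m :> R by apply: exprn_ege1; rewrite ler1n.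
have e2 : (a *+ 2) * 2 ^+ m = a * 2 ^+ m.+1 by rewrite exprS; ring.
have a2 : a *+ 2 <= pi / 2.
  move: h; rewrite -e2 => h; apply: le_trans h.
  by rewrite -{1}(mulr1 (a *+ 2)) ler_wpM2l // mulrn_wge0 // ltW.
have ah : a < pi / 2 by move: a2; rewrite mulr2n; lra.
split.
- by apply: sin_gt0_pihalf; rewrite a0 ah.
- have hp : -(pi / 2) < 0 :> R by rewrite oppr_lt0 divr_gt0.
  by apply: cos_gt0_pihalf; rewrite ah andbT; apply: lt_trans a0.
- have e := trig2 a.
  have -> : cos a ^+ 2 - sin a ^+ 2 = cos (a *+ 2) by rewrite cos_mulr2n -e; ring.
  have hp : -(pi / 2) <= 0 :> R by rewrite oppr_le0 divr_ge0 // ltW.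
  by apply: cos_ge0_pihalf; rewrite a2 andbT; apply: le_trans hp _; rewrite mulrn_wge0 // ltW.
- by rewrite e2.
Qed.

Lemma lb m : forall (a : R) (K : 'M[C]_(m.+1)), psd K -> conn K -> cone a K -> 0 < a ->
  a * 2 ^+ m <= pi / 2 ->
  forall x : 'cV[C]_(m.+1), K *m x = 0 -> x ord_max 0 = 0 -> x = 0.
Proof.
elim: m => [|m IH] a K hK hc hcone a0 ha x hx hmax.
  apply/matrixP => i j; rewrite !ord1 mxE -hmax; congr (x _ _); exact: val_inj.
have k0 := K00_pos hK hc.
have kn0 : K ord0 ord0 != 0 by rewrite gt_eqF.
have [s0 c0 cs ha2] := trig_facts a0 ha.
have hy : schur K *m rest x = 0.
  by apply/matrixP => i j; rewrite [j]ord1 schur_mul // hx !mxE mulr0 subrr.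
have hr : rest x = 0.
  apply: (IH (a *+ 2) (schur K) (psd_schur hK kn0)) => //.
  - exact: (conn_schur s0 c0 cs k0 hcone hc).
  - exact: (cone_schur s0 c0 cs k0 hcone).
  - by rewrite mulrn_wgt0.
  - rewrite mxE -hmax; congr (x _ _); apply: val_inj => /=.
    by rewrite /bump leq0n.
have h0 : x ord0 0 = 0.
  have := congr1 (fun M : 'cV[C]_(m.+2) => M ord0 0) hx; rewrite mul_row0 mxE.
  rewrite big1 ?addr0; last by move=> j _; have := congr1 (fun M : 'cV[C]_(m.+1) => M j 0) hr; rewrite !mxE => ->; rewrite mulr0.
  by move/eqP; rewrite mulf_eq0 (negbTE kn0) => /eqP.
apply/matrixP => i j; rewrite [j]ord1 mxE; case: (unliftP ord0 i) => [i'|] ->.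
  by have := congr1 (fun M : 'cV[C]_(m.+1) => M i' 0) hr; rewrite !mxE.
exact: h0.
Qed.

Lemma rank_lb m (H : 'M[C]_(m.+1)) :
  (forall x : 'cV[C]_(m.+1), H *m x = 0 -> x ord_max 0 = 0 -> x = 0) -> (m <= \rank H)%N.
Proof.
move=> hH.
set E : 'M[C]_(m.+1, m) := \matrix_(i, j) (i == widen_ord (leqnSn m) j)%:R.
have Ew (u : 'cV[C]_m) j : (E *m u) (widen_ord (leqnSn m) j) 0 = u j 0.
  rewrite mxE (bigD1 j) //= big1 ?addr0; first by rewrite mxE eqxx mul1r.
  move=> k kj; rewrite mxE.
  have -> : (widen_ord (leqnSn m) j == widen_ord (leqnSn m) k) = false.
    by apply/negbTE; apply: contra kj => /eqP [] e; apply/eqP/val_inj; rewrite /= e.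
  by rewrite mul0r.
have Em (u : 'cV[C]_m) : (E *m u) ord_max 0 = 0.
  rewrite mxE big1 // => k _; rewrite mxE.
  have -> : (ord_max == widen_ord (leqnSn m) k) = false.
    by apply/negbTE; rewrite -val_eqE /= neq_ltn ltn_ord orbT.
  by rewrite mul0r.
have fr : row_free (H *m E)^T.
  apply: inj_row_free => v hv.
  have hx : H *m (E *m v^T) = 0.
    by have := congr1 trmx hv; rewrite trmx_mul trmxK trmx0 mulmxA.
  have := hH _ hx (Em _) => e.
  apply/matrixP => k j; rewrite [k]ord1 mxE.
  by have := Ew v^T j; rewrite e !mxE => <-.
move: fr; rewrite /row_free mxrank_tr => /eqP e.
by apply: leq_trans (mxrankM_maxl H E); rewrite e.
Qed.

Lemma herm_sub n (A B : 'M[C]_n) : Defs.hermitian A -> Defs.hermitian B -> Defs.hermitian (A - B).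
Proof.
move=> hA hB; apply/matrixP => i j; rewrite !mxE rmorphB /=.
by rewrite !herm_entry.
Qed.

Lemma psd0 n : psd (0 : 'M[C]_n).
Proof.
split; first by apply/matrixP => i j; rewrite !mxE conjc0.
by move=> x; rewrite mulmx0 mul0mx mxE.
Qed.

Lemma rank_ub m (A : 'M[C]_(m.+1)) (x : 'cV[C]_(m.+1)) : x != 0 -> A *m x = 0 -> (\rank A <= m)%N.
Proof.
move=> xn0 hx; rewrite leqNgt; apply/negP => hr.
have fr : row_free A^T.
  by rewrite /row_free mxrank_tr eqn_leq rank_leq_row hr.
have : x^T *m A^T = 0 *m A^T by rewrite -trmx_mul hx trmx0 mul0mx.
move/(row_free_inj fr) => /(congr1 trmx); rewrite trmxK trmx0 => e.
by rewrite e eqxx in xn0.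
Qed.

Lemma ub m : forall K : 'M[C]_(m.+1), psd K -> exists D : 'M[C]_(m.+1),
  [/\ is_diag D, psd (K - D) & exists x : 'cV[C]_(m.+1), x != 0 /\ (K - D) *m x = 0].
Proof.
elim: m => [|m IH] K hK.
  exists K; split.
  - by move=> i j; rewrite !ord1 eqxx.
  - by rewrite subrr; apply: psd0.
  - exists (const_mx 1); split; last by rewrite subrr mul0mx.
    by apply/eqP => /matrixP/(_ 0 0); rewrite !mxE => /eqP; rewrite oner_eq0.
case: (eqVneq (K ord0 ord0) 0) => k0.
  exists 0; split.
  - by move=> i j _; rewrite mxE.
  - by rewrite subr0.
  - exists (delta_mx ord0 0); split.
      by apply/eqP => /matrixP/(_ ord0 0); rewrite !mxE !eqxx => /eqP; rewrite oner_eq0.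
    rewrite subr0 -colE; apply/matrixP => i j; rewrite !mxE.
    by rewrite -(herm_entry _ _ hK.1) (psd_row0 _ hK k0) conjc0.
have kp : 0 < K ord0 ord0 by rewrite lt_def k0 psd_diag_ge0.
have [D' [hD' hpsd' [y [yn0 hy]]]] := IH _ (psd_schur hK k0).
pose D : 'M[C]_(m.+2) := \matrix_(i, j)
  (if unlift ord0 i is Some i' then
     (if unlift ord0 j is Some j' then D' i' j' else 0) else 0).
have Dll i j : D (lift ord0 i) (lift ord0 j) = D' i j by rewrite mxE !liftK.
have D0j j : D ord0 j = 0 by rewrite mxE unlift_none.
have Di0 i : D i ord0 = 0 by rewrite mxE unlift_none; case: unlift.
have eS : schur (K - D) = schur K - D'.
  apply/matrixP => i j; rewrite !mxE !liftK unlift_none !subr0; ring.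
have hD'h : Defs.hermitian D'.
  have -> : D' = schur K - (schur K - D') by rewrite opprB addrC subrK.
  by apply: herm_sub; [apply: herm_schur; case: hK | case: hpsd'].
have hDh : Defs.hermitian D.
  apply/matrixP => i j; rewrite [X in X = _]mxE [X in X = _]mxE.
  case: (unliftP ord0 i) => [i'|] ->; case: (unliftP ord0 j) => [j'|] ->;
    idtac.
  all: try (rewrite ?Dll ?D0j ?Di0 ?conjc0 //).
  exact: (herm_entry i' j' hD'h).
have k0' : (K - D) ord0 ord0 != 0 by rewrite !mxE unlift_none subr0.
exists D; split.
- move=> i j; case: (unliftP ord0 i) => [i'|] ->; case: (unliftP ord0 j) => [j'|] ->;
    try by rewrite ?D0j ?Di0.
  rewrite Dll => ne; apply: hD'.
  by apply: contra ne => /eqP ->.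
- apply: psd_of_schur; first by apply: herm_sub => //; case: hK.
    by rewrite !mxE unlift_none subr0.
  by rewrite eS.
- exists (ext (K - D) y); split.
    apply: contraNneq yn0 => e; rewrite -(rest_ext (K - D) y) e.
    by apply/eqP/matrixP => i j; rewrite !mxE.
  apply/matrixP => i j; rewrite [j]ord1 [X in _ = X]mxE.
  case: (unliftP ord0 i) => [i'|] ->; last exact: ext_row0.
  have := schur_mul (ext (K - D) y) i' k0'.
  rewrite rest_ext eS hy ext_row0 // mulr0 subr0 mxE => <-.
  by [].
Qed.

Lemma arg_cone (a : R) (z : C) : 0 < a -> a <= pi / 2 -> z != 0 -> arg_in z (- a) a -> incone a z.
Proof.
move=> a0 ah zn0 [t [/andP[ta1 ta2] ez]].
have p0 : 0 < pi :> R by apply: pi_gt0.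
have hpi : pi / 2 < pi :> R by rewrite ltr_pdivrMr // ltr_pMr // ltr1n.
rewrite ez normc_def.
set rho := Num.sqrt _.
have r0 : 0 < rho.
  have : 0 < `|z| by rewrite normr_gt0.
  by rewrite normc_def ltcR.
rewrite /incone; simpc; rewrite /= normrM (gtr0_norm r0) -!mulrA ltr_pM2l //.
move: ah hpi; set h := pi / 2 => ah hpi.
case: (lerP 0 t) => t0.
  have st : 0 <= sin t by apply: sin_ge0_pi; apply/andP; split; lra.
  rewrite (ger0_norm st) -subr_gt0.
  have -> : cos t * sin a - sin t * cos a = sin (a - t) by rewrite sinB; ring.
  by apply: sin_gt0_pi; apply/andP; split; lra.
have st : sin t <= 0.
  have : 0 <= sin (- t) by apply: sin_ge0_pi; apply/andP; split; lra.
  by rewrite sinN oppr_ge0.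
rewrite (ler0_norm st) -subr_gt0.
have -> : cos t * sin a - - sin t * cos a = sin (a + t) by rewrite sinD; ring.
by apply: sin_gt0_pi; apply/andP; split; lra.
Qed.

Lemma irr_conn n (S : 'M[C]_(n.+1)) : Defs.hermitian S -> Defs.irreducible S -> conn S.
Proof.
move=> hS hirr A An0 AnT.
case: (boolP [exists i, exists j, [&& i \in A, j \notin A & S i j != 0]]).
  by case/existsP => i /existsP[j /and3P[iA jA nz]]; exists i, j.
move=> hno; exfalso; apply: hirr.
have h0 i j : i \in A -> j \notin A -> S i j = 0.
  move=> iA jA; apply/eqP; apply: contraNT hno => nz.
  by apply/existsP; exists i; apply/existsP; exists j; rewrite iA jA nz.
set s := enum A ++ enum (~: A).
have ss : size s = n.+1 by rewrite size_cat -!cardE cardsC card_ord.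
have us : uniq s.
  rewrite cat_uniq !enum_uniq /= andbT; apply/hasPn => x.
  by rewrite !mem_enum in_setC.
pose f (i : 'I_n.+1) := nth ord0 s i.
have finj : injective f.
  by move=> i j /eqP; rewrite /f nth_uniq ?ss // => /eqP e; apply: val_inj.
have fA i : (f i \in A) = (i < #|A|)%N.
  rewrite /f nth_cat -cardE; case: ifP => lt.
    by rewrite -mem_enum mem_nth // -cardE.
  have hl : (i - #|A| < size (enum (~: A)))%N.
    rewrite -cardE ltn_subLR; last by rewrite leqNgt lt.
    by rewrite cardsC card_ord.
  have := mem_nth ord0 hl; rewrite mem_enum in_setC => /negbTE ->.
  by [].
exists (perm finj), #|A|; split.
  apply/andP; split; first by rewrite lt0n cards_eq0.
  have := proper_card (A := A) (B := setT); rewrite properT cardsT card_ord.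
  by move/(_ AnT).
move=> i j; rewrite !permE -!fA.
case: (boolP (f i \in A)) => hi; case: (boolP (f j \in A)) => hj //= _.
  exact: h0.
by rewrite -(herm_entry _ _ hS) h0 // conjc0.
Qed.
End Cone.

Unset Implicit Arguments.

Theorem theorem4 (R : realType) (n : nat) (S : 'M[R[i]]_n) :
  psd S -> irreducible S ->
  (forall i j : 'I_n, i != j -> S i j != 0 ->
     arg_in (- S i j) (- (pi / 2 ^+ n)) (pi / 2 ^+ n)) ->
  is_mr S n.-1.
Proof.
case: n S => [|m] S hS hirr hang.
  split => [|Sh St _ //]; exists 0, 0; split; last by rewrite mxrank0.
  split; first by apply/matrixP => i; case: i.
  by split; [apply: psd0 | move=> i j _; rewrite mxE].
set a := pi / 2 ^+ m.+1 : R.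
have p0 : 0 < pi :> R by apply: pi_gt0.
have a0 : 0 < a by rewrite divr_gt0 // exprn_gt0.
have ea : a * 2 ^+ m = pi / 2.
  by rewrite /a exprS; field; rewrite expf_neq0 // pnatr_eq0.
have ah : a <= pi / 2.
  by rewrite -ea -{1}(mulr1 a) ler_pM2l // exprn_ege1 // ler1n.
have hc := irr_conn hS.1 hirr.
have low : forall Sh St : 'M[R[i]]_(m.+1), decomp S Sh St -> (m <= \rank Sh)%N.
  move=> Sh St [eS [hSh hSt]].
  have off i j : i != j -> Sh i j = S i j by move=> ij; rewrite eS mxE hSt // add0r.
  apply: rank_lb; apply: (lb (a := a)) => //.
  - move=> A An0 AnT; have [i [j [iA jA nz]]] := hc A An0 AnT.
    exists i, j; split => //; rewrite off //.
    by apply: contraNneq jA => <-.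
  - move=> i j ij; rewrite off //.
    case: (eqVneq (S i j) 0) => [->|nz]; first by left.
    right; apply: arg_cone => //; first by rewrite oppr_eq0.
    exact: hang.
  - by rewrite ea.
have [D [hD hpsd [x [xn0 hx]]]] := ub hS.
split => //; exists (S - D), D; split.
  by split; [rewrite addrC subrK | split].
apply/eqP; rewrite eqn_leq (rank_ub xn0 hx) /=.
by apply: (low _ D); split; [rewrite addrC subrK | split].
Qed.
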